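(* For every Baire metric space $X$, $dis(X)\geq\Delta(X)$.
   Context: $dis(X)$ denotes the least cardinal $\tau$ such that $X$ is the union of $\tau$ discrete subspaces. $\Delta(X)$ is the least cardinality of a non-empty open subset of $X$. *)

(* Defs.v *)
From Stdlib Require Import Reals.
Open Scope R_scope.

Definition is_metric {X : Type} (d : X -> X -> R) : Prop :=
  (forall x y, 0 <= d x y) /\
  (forall x y, d x y = 0 <-> x = y) /\
  (forall x y, d x y = d y x) /\
  (forall x y z, d x z <= d x y + d y z).

Definition ball {X : Type} (d : X -> X -> R) (x : X) (r : R) : X -> Prop :=
  fun y => d x y < r.

Definition is_open {X : Type} (d : X -> X -> R) (U : X -> Prop) : Prop :=
  forall x, U x -> exists r, 0 < r /\ forall y, ball d x r y -> U y.

Definition is_dense {X : Type} (d : X -> X -> R) (A : X -> Prop) : Prop :=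
  forall U, is_open d U -> (exists x, U x) -> exists x, U x /\ A x.

Definition is_Baire {X : Type} (d : X -> X -> R) : Prop :=
  forall G : nat -> X -> Prop,
    (forall n, is_open d (G n) /\ is_dense d (G n)) ->
    is_dense d (fun x => forall n, G n x).

Definition is_discrete_subspace {X : Type} (d : X -> X -> R) (D : X -> Prop) : Prop :=
  forall x, D x -> exists r, 0 < r /\ forall y, D y -> ball d x r y -> y = x.

Definition card_le_set {X I : Type} (U : X -> Prop) : Prop :=
  exists f : X -> I, forall x y, U x -> U y -> f x = f y -> x = y.

(* Main.v *)
Require Import Defs.
From Stdlib Require Import Reals Lra Lia List Arith Cantor Classical ClassicalEpsilon FunctionalExtensionality PropExtensionality.
Open Scope nat_scope.

Definition sub {T : Type} (A B : T -> Prop) := forall x, A x -> B x.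

Lemma pred_ext {T : Type} (A B : T -> Prop) : sub A B -> sub B A -> A = B.
Proof.
  intros h1 h2; apply functional_extensionality; intro x;
  apply propositional_extensionality; split; auto.
Qed.

Lemma fchoice {A B : Type} (P : A -> B -> Prop) : (forall a, exists b, P a b) -> exists f : A -> B, forall a, P a (f a).
Proof.
  intro h. exists (fun a => proj1_sig (constructive_indefinite_description _ (h a))).
  intro a. exact (proj2_sig (constructive_indefinite_description _ (h a))).
Qed.

Definition is_chain {T : Type} (C : (T -> Prop) -> Prop) :=
  forall A B, C A -> C B -> sub A B \/ sub B A.

Definition bigU {T : Type} (C : (T -> Prop) -> Prop) : T -> Prop :=
  fun x => exists A, C A /\ A x.

Section Tower.
Variable T : Type.
Variable F : (T -> Prop) -> Prop.
Variable g : (T -> Prop) -> (T -> Prop).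
Variable A0 : T -> Prop.

Inductive tw : (T -> Prop) -> Prop :=
| tw0 : tw A0
| twS A : tw A -> tw (g A)
| twU C : (forall A, C A -> tw A) -> (exists A, C A) -> is_chain C -> tw (bigU C).

Hypothesis gext : forall A, sub A (g A).

Lemma tw_base : forall x, tw x -> sub A0 x.
Proof.
  induction 1.
  - intros t h; exact h.
  - intros t h; apply gext; auto.
  - destruct H1 as [A HA]. intros t h. exists A; split; auto. apply (H0 A HA t h).
Qed.

Definition extreme c := forall x, tw x -> sub x c -> ~ sub c x -> sub (g x) c.

Lemma lemA : forall c, tw c -> extreme c -> forall x, tw x -> sub x c \/ sub (g c) x.
Proof.
  intros c Hc Ec x Hx. induction Hx.
  - left. apply tw_base; auto.
  - destruct IHHx as [h|h].
    + destruct (classic (sub c A)) as [h2|h2].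
      * assert (A = c) by (apply pred_ext; auto). subst. right. intros t ht; exact ht.
      * left. apply Ec; auto.
    + right. intros t ht. apply gext. apply h; auto.
  - destruct (classic (exists A, C A /\ sub (g c) A)) as [[A [HA h]]|h].
    + right. intros t ht. exists A. split; auto.
    + left. intros t [A [HA ht]]. destruct (H0 A HA) as [h2|h2].
      * apply h2; auto.
      * exfalso; apply h; eauto.
Qed.

Lemma lemB : forall c, tw c -> extreme c.
Proof.
  induction 1.
  - intros x Hx h1 h2. exfalso. apply h2. apply tw_base; auto.
  - intros x Hx h1 h2. destruct (lemA A H IHtw x Hx) as [h|h].
    + destruct (classic (sub A x)) as [h3|h3].
      * assert (x = A) by (apply pred_ext; auto). subst. intros t ht; exact ht.
      * intros t ht. apply gext. apply (IHtw x Hx h h3); auto.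
    + exfalso. apply h2. auto.
  - intros x Hx h1 h2.
    destruct (classic (exists A, C A /\ sub x A)) as [[A [HA hA]]|hn].
    + destruct (classic (sub A x)) as [h3|h3].
      * assert (x = A) by (apply pred_ext; auto). subst.
        destruct (classic (sub (bigU C) A)) as [h4|h4]; [contradiction|].
        apply not_all_ex_not in h4. destruct h4 as [t ht].
        apply imply_to_and in ht. destruct ht as [[B [HB hBt]] hAt].
        destruct (lemA A (H A HA) (H0 A HA) B (H B HB)) as [h5|h5].
        -- exfalso; apply hAt; auto.
        -- intros s hs. exists B; split; auto.
      * intros t ht. exists A. split; auto. apply (H0 A HA x Hx hA h3); auto.
    + exfalso. apply h2. intros t [A [HA ht]].
      destruct (lemA A (H A HA) (H0 A HA) x Hx) as [h5|h5].
      * exfalso; apply hn; eauto.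
      * apply h5. apply gext. auto.
Qed.

Lemma tw_chain : is_chain tw.
Proof.
  intros x y Hx Hy. destruct (lemA y Hy (lemB y Hy) x Hx) as [h|h]; auto.
  right. intros t ht. apply h. apply gext. auto.
Qed.
End Tower.

Lemma zorn_sets (T : Type) (F : (T -> Prop) -> Prop) :
  (exists A, F A) ->
  (forall C, (forall A, C A -> F A) -> (exists A, C A) -> is_chain C -> F (bigU C)) ->
  exists M, F M /\ forall N, F N -> sub M N -> sub N M.
Proof.
  intros [A0 HA0] Hch.
  apply NNPP. intro hn.
  assert (h : forall M, exists N, F M -> F N /\ sub M N /\ ~ sub N M).
  { intro M. destruct (classic (F M)) as [hM|hM].
    - assert (exists N, F N /\ sub M N /\ ~ sub N M) as [N HN].
      { apply NNPP. intro h2. apply hn. exists M. split; auto.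
        intros N HN HMN. apply NNPP. intro h3. apply h2. eauto. }
      exists N; auto.
    - exists M. intro; contradiction. }
  apply fchoice in h. destruct h as [g Hg].
  assert (gF : forall A, tw T g A0 A -> F A).
  { induction 1; auto. apply Hg; auto. }
  assert (gext : forall A, F A -> sub A (g A)).
  { intros A HA. apply Hg; auto. }
  (* restrict: tower elements are in F, so gext holds on tower *)
  set (g' := fun A => if excluded_middle_informative (F A) then g A else A).
  assert (gext' : forall A, sub A (g' A)).
  { intros A. unfold g'. destruct (excluded_middle_informative (F A)); auto. intros t ht; exact ht. }
  assert (gF' : forall A, tw T g' A0 A -> F A).
  { induction 1; auto. unfold g'. destruct (excluded_middle_informative (F A)); auto. apply Hg; auto. }
  set (U := bigU (tw T g' A0)).
  assert (HU : tw T g' A0 U).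
  { apply twU. auto. exists A0. apply tw0. apply tw_chain; auto. }
  assert (HgU : tw T g' A0 (g' U)) by (apply twS; auto).
  assert (FU := gF' U HU).
  assert (sub (g' U) U). { intros t ht. exists (g' U). split; auto. }
  unfold g' in H. destruct (excluded_middle_informative (F U)); [|contradiction].
  apply (Hg U FU). auto.
Qed.

Definition inj_on {I J : Type} (S : I -> Prop) (f : I -> J) := forall x y, S x -> S y -> f x = f y -> x = y.

Lemma compar (I : Type) (S1 S2 : I -> Prop) :
  (exists f : I -> I, (forall x, S1 x -> S2 (f x)) /\ inj_on S1 f) \/
  (exists f : I -> I, (forall x, S2 x -> S1 (f x)) /\ inj_on S2 f).
Proof.
  set (F := fun R : I * I -> Prop =>
    (forall x y, R (x, y) -> S1 x /\ S2 y) /\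
    (forall x y y', R (x, y) -> R (x, y') -> y = y') /\
    (forall x x' y, R (x, y) -> R (x', y) -> x = x')).
  destruct (zorn_sets (I * I) F) as [M [[HM1 [HM2 HM3]] Hmax]].
  - exists (fun _ => False). unfold F; cbv beta; repeat split; intros; contradiction.
  - intros C HC [A0 HA0] Hc. unfold F. cbv beta. split; [|split].
    + intros x y [A [HA h]]. apply (HC A HA); auto.
    + intros x y y' [A [HA h]] [B [HB h']].
      destruct (Hc A B HA HB) as [s|s].
      * apply (proj1 (proj2 (HC B HB)) x); auto.
      * apply (proj1 (proj2 (HC A HA)) x); auto.
    + intros x x' y [A [HA h]] [B [HB h']].
      destruct (Hc A B HA HB) as [s|s].
      * apply (proj2 (proj2 (HC B HB)) x x' y); auto.
      * apply (proj2 (proj2 (HC A HA)) x x' y); auto.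
  - destruct (classic (forall x, S1 x -> exists y, M (x, y))) as [h|h].
    + left. assert (forall x, exists y, S1 x -> M (x, y)) as h'.
      { intro x. destruct (classic (S1 x)) as [s|s].
        - destruct (h x s) as [y hy]. eauto.
        - exists x. intro; contradiction. }
      apply fchoice in h'. destruct h' as [f hf].
      exists f. split.
      * intros x hx. apply (HM1 x (f x)). auto.
      * intros x y hx hy e. apply (HM3 x y (f x)); auto. rewrite e; auto.
    + apply not_all_ex_not in h. destruct h as [x0 h]. apply imply_to_and in h.
      destruct h as [hx0 hnx0].
      right.
      destruct (classic (forall y, S2 y -> exists x, M (x, y))) as [h|h].
      * assert (forall y, exists x, S2 y -> M (x, y)) as h'.
        { intro y. destruct (classic (S2 y)) as [s|s].
          - destruct (h y s) as [x hx]. eauto.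
          - exists y. intro; contradiction. }
        apply fchoice in h'. destruct h' as [f hf].
        exists f. split.
        -- intros y hy. apply (HM1 (f y) y). auto.
        -- intros x y hx hy e. apply (HM2 (f x) x y); auto. rewrite e; auto.
      * exfalso. apply not_all_ex_not in h. destruct h as [y0 h]. apply imply_to_and in h.
        destruct h as [hy0 hny0].
        set (M' := fun p : I * I => M p \/ p = (x0, y0)).
        assert (FM' : F M').
        { unfold F, M'. cbv beta. split; [|split].
          - intros x y [h|h]; [apply HM1; auto| injection h; intros; subst; auto].
          - intros x y y' [h|h] [h'|h'].
            + eapply HM2; eauto.
            + injection h'; intros; subst. exfalso; apply hnx0; eauto.
            + injection h; intros; subst. exfalso; apply hnx0; eauto.
            + injection h; injection h'; intros; subst; auto.
          - intros x x' y [h|h] [h'|h'].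
            + eapply HM3; eauto.
            + injection h'; intros; subst. exfalso; apply hny0; eauto.
            + injection h; intros; subst. exfalso; apply hny0; eauto.
            + injection h; injection h'; intros; subst; auto. }
        assert (sub M M') by (intros p hp; left; auto).
        specialize (Hmax M' FM' H (x0, y0) (or_intror eq_refl)).
        apply hnx0. eauto.
Qed.

Section Hess.
Variable I : Type.
Variable g : nat -> I.
Hypothesis hg : forall m n, g m = g n -> m = n.

Definition FH (P : I + (I * I * I) -> Prop) : Prop :=
 (forall n, P (inl (g n))) /\
 (forall a b c c', P (inr (a,b,c)) -> P (inr (a,b,c')) -> c = c') /\
 (forall a b a' b' c, P (inr (a,b,c)) -> P (inr (a',b',c)) -> a = a' /\ b = b') /\
 (forall a b, P (inl a) -> P (inl b) -> exists c, P (inr (a,b,c))) /\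
 (forall a b c, P (inr (a,b,c)) -> P (inl a) /\ P (inl b) /\ P (inl c)).

Lemma to_nat_inj p q : to_nat p = to_nat q -> p = q.
Proof. intro h. rewrite <- (cancel_of_to p), <- (cancel_of_to q), h. reflexivity. Qed.

Definition P0 (t : I + (I * I * I)) : Prop :=
  match t with
  | inl a => exists n, a = g n
  | inr (a, b, c) => exists m n, a = g m /\ b = g n /\ c = g (to_nat (m, n))
  end.

Lemma FH_P0 : FH P0.
Proof.
  unfold FH, P0. split; [|split; [|split; [|split]]].
  - intro n; exists n; auto.
  - intros a b c c' [m [n [e1 [e2 e3]]]] [m' [n' [e1' [e2' e3']]]]. subst.
    apply hg in e1'. apply hg in e2'. subst. auto.
  - intros a b a' b' c [m [n [e1 [e2 e3]]]] [m' [n' [e1' [e2' e3']]]]. subst.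
    apply hg in e3'. apply to_nat_inj in e3'. injection e3'; intros; subst. auto.
  - intros a b [m e] [n e']. subst. exists (g (to_nat (m, n))). exists m, n. auto.
  - intros a b c [m [n [e1 [e2 e3]]]]. subst. split; [|split]; eauto.
Qed.

Lemma FH_chain : forall C, (forall A, C A -> FH A) -> (exists A, C A) -> is_chain C -> FH (bigU C).
Proof.
  intros C HC [A0 HA0] Hc. unfold FH, bigU. split; [|split; [|split; [|split]]].
  - intro n. exists A0. split; auto. apply (HC A0 HA0).
  - intros a b c c' [A [HA h]] [B [HB h']].
    destruct (Hc A B HA HB) as [s|s].
    + apply (proj1 (proj2 (HC B HB)) a b); auto.
    + apply (proj1 (proj2 (HC A HA)) a b); auto.
  - intros a b a' b' c [A [HA h]] [B [HB h']].
    destruct (Hc A B HA HB) as [s|s].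
    + apply (proj1 (proj2 (proj2 (HC B HB))) a b a' b' c); auto.
    + apply (proj1 (proj2 (proj2 (HC A HA))) a b a' b' c); auto.
  - intros a b [A [HA h]] [B [HB h']].
    destruct (Hc A B HA HB) as [s|s].
    + destruct (proj1 (proj2 (proj2 (proj2 (HC B HB)))) a b) as [c hc]; auto. eauto.
    + destruct (proj1 (proj2 (proj2 (proj2 (HC A HA)))) a b) as [c hc]; auto. eauto.
  - intros a b c [A [HA h]].
    destruct (proj2 (proj2 (proj2 (proj2 (HC A HA)))) a b c h) as [h1 [h2 h3]].
    split; [|split]; eauto.
Qed.

Section Ext.
Variable M : I + (I * I * I) -> Prop.
Hypothesis HM : FH M.
Let A a := M (inl a).
Let R a b c := M (inr (a, b, c)).
Variable phi : I -> I.
Hypothesis hphi1 : forall x, A x -> ~ A (phi x).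
Hypothesis hphi2 : inj_on A phi.

Definition ex0 (t : nat) a := match t with 0 => a | _ => phi a end.
Definition ex1 (t : nat) b := match t with 1 => b | _ => phi b end.

Lemma key1 t t' a a' b b' : t <= 2 -> t' <= 2 -> A a -> A a' -> A b -> A b' ->
  ex0 t a = ex0 t' a' -> ex1 t b = ex1 t' b' -> t = t' /\ a = a' /\ b = b'.
Proof.
  intros ht ht' ha ha' hb hb' e1 e2.
  destruct t as [|[|[|t]]]; try lia; destruct t' as [|[|[|t']]]; try lia; simpl in *;
  try (split; [reflexivity|split]; first [assumption | apply hphi2; assumption]; fail);
  exfalso;
  first [ solve [apply (hphi1 a'); auto; rewrite <- e1; auto]
        | solve [apply (hphi1 a); auto; rewrite e1; auto]
        | solve [apply (hphi1 b'); auto; rewrite <- e2; auto]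
        | solve [apply (hphi1 b); auto; rewrite e2; auto] ].
Qed.

Lemma key2 t a b : t <= 2 -> A a -> A b -> A (ex0 t a) -> A (ex1 t b) -> False.
Proof.
  intros ht ha hb h1 h2.
  destruct t as [|[|[|t]]]; try lia; simpl in *.
  - apply (hphi1 b); auto.
  - apply (hphi1 a); auto.
  - apply (hphi1 a); auto.
Qed.

Definition M' (t : I + (I * I * I)) : Prop :=
  match t with
  | inl x => A x \/ exists a, A a /\ x = phi a
  | inr (x, y, z) => R x y z \/ exists a b c d t, t <= 2 /\ A a /\ A b /\ R a b c /\ R c (g t) d /\
        z = phi d /\ x = ex0 t a /\ y = ex1 t b
  end.

Lemma M'_ex0 t a : A a -> M' (inl (ex0 t a)).
Proof. intro h. destruct t; simpl; eauto. Qed.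
Lemma M'_ex1 t a : A a -> M' (inl (ex1 t a)).
Proof. intro h. destruct t as [|[|t]]; simpl; eauto. Qed.

Lemma FH_M' : FH M'.
Proof.
  destruct HM as [H1 [H2 [H3 [H4 H5]]]].
  fold A in H1, H4, H5. fold R in H2, H3, H4, H5.
  assert (H1' : forall n, A (g n)) by exact H1.
  unfold FH. split; [|split; [|split; [|split]]].
  - intro n. simpl. left. auto.
  - intros x y z z'. simpl. intros [h|h] [h'|h'].
    + eapply H2; eauto.
    + exfalso. destruct h' as [a [b [c [d [t [ht [ha [hb [hc [hd [e1 [e2 e3]]]]]]]]]]]]. subst.
      destruct (H5 _ _ _ h) as [k1 [k2 k3]]. apply (key2 t a b); auto.
    + exfalso. destruct h as [a [b [c [d [t [ht [ha [hb [hc [hd [e1 [e2 e3]]]]]]]]]]]]. subst.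
      destruct (H5 _ _ _ h') as [k1 [k2 k3]]. apply (key2 t a b); auto.
    + destruct h as [a [b [c [d [t [ht [ha [hb [hc [hd [e1 [e2 e3]]]]]]]]]]]].
      destruct h' as [a' [b' [c' [d' [t' [ht' [ha' [hb' [hc' [hd' [e1' [e2' e3']]]]]]]]]]]].
      subst. destruct (key1 t t' a a' b b') as [k1 [k2 k3]]; auto. subst.
      assert (c = c') by (eapply H2; eauto). subst.
      assert (d = d') by (eapply H2; eauto). subst. auto.
  - intros x y x' y' z. simpl. intros [h|h] [h'|h'].
    + eapply H3; eauto.
    + exfalso. destruct h' as [a [b [c [d [t [ht [ha [hb [hc [hd [e1 [e2 e3]]]]]]]]]]]]. subst.
      destruct (H5 _ _ _ h) as [k1 [k2 k3]]. destruct (H5 _ _ _ hd) as [k4 [k5 k6]].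
      apply (hphi1 d); auto.
    + exfalso. destruct h as [a [b [c [d [t [ht [ha [hb [hc [hd [e1 [e2 e3]]]]]]]]]]]]. subst.
      destruct (H5 _ _ _ h') as [k1 [k2 k3]]. destruct (H5 _ _ _ hd) as [k4 [k5 k6]].
      apply (hphi1 d); auto.
    + destruct h as [a [b [c [d [t [ht [ha [hb [hc [hd [e1 [e2 e3]]]]]]]]]]]].
      destruct h' as [a' [b' [c' [d' [t' [ht' [ha' [hb' [hc' [hd' [e1' [e2' e3']]]]]]]]]]]].
      subst.
      destruct (H5 _ _ _ hd) as [k4 [k5 k6]]. destruct (H5 _ _ _ hd') as [k4' [k5' k6']].
      assert (d = d') by (apply hphi2; auto). subst.
      destruct (H3 _ _ _ _ _ hd hd') as [e4 e5]. subst. apply hg in e5. subst.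
      destruct (H3 _ _ _ _ _ hc hc') as [e4 e5]. subst. auto.
  - intros x y. simpl. intros [hx|[a [ha ex]]] [hy|[b [hb ey]]].
    + destruct (H4 x y hx hy) as [c hc]. exists c. left. auto.
    + destruct (H4 x b hx hb) as [c hc]. destruct (H5 _ _ _ hc) as [k1 [k2 k3]].
      destruct (H4 c (g 0) k3 (H1' 0)) as [d hd].
      exists (phi d). right. exists x, b, c, d, 0. subst. repeat split; auto.
    + destruct (H4 a y ha hy) as [c hc]. destruct (H5 _ _ _ hc) as [k1 [k2 k3]].
      destruct (H4 c (g 1) k3 (H1' 1)) as [d hd].
      exists (phi d). right. exists a, y, c, d, 1. subst. repeat split; auto.
    + destruct (H4 a b ha hb) as [c hc]. destruct (H5 _ _ _ hc) as [k1 [k2 k3]].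
      destruct (H4 c (g 2) k3 (H1' 2)) as [d hd].
      exists (phi d). right. exists a, b, c, d, 2. subst. repeat split; auto.
  - intros x y z. simpl. intros [h|h].
    + destruct (H5 _ _ _ h) as [k1 [k2 k3]]. auto.
    + destruct h as [a [b [c [d [t [ht [ha [hb [hc [hd [e1 [e2 e3]]]]]]]]]]]]. subst.
      destruct (H5 _ _ _ hd) as [k4 [k5 k6]].
      split; [|split]; [apply M'_ex0 | apply M'_ex1 | right; eauto]; auto.
Qed.

Lemma sub_M' : sub M M'.
Proof. intros [x|[[x y] z]] h; simpl; left; exact h. Qed.
End Ext.

Theorem hess : exists h : I * I -> I, forall p q, h p = h q -> p = q.
Proof.
  destruct (zorn_sets _ FH (ex_intro _ P0 FH_P0) FH_chain) as [M [HM Hmax]].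
  set (A := fun a => M (inl a)).
  set (R := fun a b c => M (inr (a, b, c))).
  destruct (compar I A (fun x => ~ A x)) as [[phi [hp1 hp2]]|[psi [hp1 hp2]]].
  - exfalso.
    assert (F' := FH_M' M HM phi hp1 hp2).
    specialize (Hmax _ F' (sub_M' M phi) (inl (phi (g 0)))).
    simpl in Hmax. apply (hp1 (g 0)). apply (proj1 HM).
    apply Hmax. right. exists (g 0). split; auto. apply (proj1 HM).
  - destruct HM as [H1 [H2 [H3 [H4 H5]]]].
    assert (h : forall p : I * I, exists c, A (fst p) -> A (snd p) -> R (fst p) (snd p) c).
    { intros [a b]. simpl. destruct (classic (A a /\ A b)) as [[ha hb]|hn].
      - destruct (H4 a b ha hb) as [c hc]. exists c. auto.
      - exists a. intros; exfalso; auto. }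
    apply fchoice in h. destruct h as [rho0 hrho0].
    set (rho := fun a b => rho0 (a, b)).
    assert (hr : forall a b, A a -> A b -> R a b (rho a b)).
    { intros a b ha hb. apply (hrho0 (a, b)); auto. }
    set (theta := fun x => if excluded_middle_informative (A x) then rho x (g 0) else rho (psi x) (g 1)).
    assert (ht1 : forall x, A (theta x)).
    { intro x. unfold theta. destruct (excluded_middle_informative (A x)).
      - destruct (H5 _ _ _ (hr x (g 0) a (H1 0))) as [_ [_ k]]. exact k.
      - destruct (H5 _ _ _ (hr (psi x) (g 1) (hp1 x n) (H1 1))) as [_ [_ k]]. exact k. }
    assert (ht2 : forall x y, theta x = theta y -> x = y).
    { intros x y e. unfold theta in e.
      destruct (excluded_middle_informative (A x)) as [hx|hx];
      destruct (excluded_middle_informative (A y)) as [hy|hy].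
      - assert (k1 := hr x (g 0) hx (H1 0)). rewrite e in k1.
        destruct (H3 _ _ _ _ _ k1 (hr y (g 0) hy (H1 0))) as [k _]; exact k.
      - exfalso. assert (k1 := hr x (g 0) hx (H1 0)). rewrite e in k1.
        destruct (H3 _ _ _ _ _ k1 (hr (psi y) (g 1) (hp1 y hy) (H1 1))) as [_ k2].
        apply hg in k2. discriminate.
      - exfalso. assert (k1 := hr y (g 0) hy (H1 0)). rewrite <- e in k1.
        destruct (H3 _ _ _ _ _ k1 (hr (psi x) (g 1) (hp1 x hx) (H1 1))) as [_ k2].
        apply hg in k2. discriminate.
      - assert (k1 := hr (psi x) (g 1) (hp1 x hx) (H1 1)). rewrite e in k1.
        destruct (H3 _ _ _ _ _ k1 (hr (psi y) (g 1) (hp1 y hy) (H1 1))) as [k2 _].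
        apply hp2; auto. }
    exists (fun p => rho (theta (fst p)) (theta (snd p))).
    intros [x y] [x' y'] e. simpl in e.
    assert (k := hr _ _ (ht1 x) (ht1 y)). rewrite e in k.
    destruct (H3 _ _ _ _ _ k (hr _ _ (ht1 x') (ht1 y'))) as [k1 k2].
    apply ht2 in k1. apply ht2 in k2. subst. auto.
Qed.
End Hess.
Open Scope R_scope.
Open Scope R_scope.

Definition eps (n : nat) : R := / INR (S n).

Lemma eps_pos n : 0 < eps n.
Proof. unfold eps. apply Rinv_0_lt_compat. apply lt_0_INR. lia. Qed.

Lemma eps_small r : 0 < r -> exists n, eps n < r.
Proof.
  intro hr. destruct (INR_unbounded (/ r)) as [n hn]. exists n. unfold eps.
  assert (INR n < INR (S n)) by (apply lt_INR; lia).
  assert (0 < / r) by (apply Rinv_0_lt_compat; auto).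
  rewrite <- (Rinv_inv r). apply Rinv_lt_contravar.
  - apply Rmult_lt_0_compat; lra.
  - lra.
Qed.

Section Main.
Variable X : Type.
Variable d : X -> X -> R.
Hypothesis hd : is_metric d.

Lemma d_pos x y : 0 <= d x y. Proof. apply hd. Qed.
Lemma d_refl x : d x x = 0. Proof. apply (proj1 (proj2 hd)). auto. Qed.
Lemma d_eq x y : d x y = 0 -> x = y. Proof. apply (proj1 (proj2 hd)). Qed.
Lemma d_sym x y : d x y = d y x. Proof. apply hd. Qed.
Lemma d_tri x y z : d x z <= d x y + d y z. Proof. apply hd. Qed.

Lemma d_neq_pos x y : x <> y -> 0 < d x y.
Proof.
  intro h. destruct (Rle_lt_or_eq_dec 0 (d x y) (d_pos x y)) as [h'|h']; auto.
  exfalso. apply h. apply d_eq. auto.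
Qed.
End Main.

Theorem mainTheorem3 (X : Type) (d : X -> X -> R) (hd : is_metric d)
  (hB : is_Baire d) (hne : exists x : X, True)
  (I : Type) (D : I -> X -> Prop)
  (hD : forall i, is_discrete_subspace d (D i))
  (hcov : forall x, exists i, D i x) :
  exists U : X -> Prop, is_open d U /\ (exists x, U x) /\ @card_le_set X I U.
Proof.
  pose proof (d_pos X d hd) as dpos. pose proof (d_refl X d hd) as drefl.
  pose proof (d_sym X d hd) as dsym. pose proof (d_tri X d hd) as dtri.
  pose proof (d_neq_pos X d hd) as dneq.
  apply fchoice in hcov. destruct hcov as [i hi].
  destruct hne as [x00 _].
  destruct (classic (exists a r, 0 < r /\ forall y, d a y < r -> y = a)) as [[a [r [hr ha]]]|noiso].
  { exists (fun y => y = a). split; [|split].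
    - intros x hx. subst. exists r. split; auto.
    - exists a; auto.
    - exists (fun _ => i a). intros x y hx hy _. subst; auto. }
  assert (noiso' : forall a r, 0 < r -> exists y, y <> a /\ d a y < r).
  { intros a r hr. apply NNPP. intro h. apply noiso. exists a, r. split; auto.
    intros y hy. apply NNPP. intro hn. apply h. eauto. }
  clear noiso.
  set (E := fun n x => forall y, D (i x) y -> d x y < eps n -> y = x).
  assert (hk : forall x, exists n, E n x).
  { intro x. destruct (hD (i x) x (hi x)) as [r [hr h]].
    destruct (eps_small r hr) as [n hn]. exists n. intros y hy hdy.
    apply h; auto. unfold ball. lra. }
  apply fchoice in hk. destruct hk as [k hk].
  assert (Einj : forall n e e', E n e -> E n e' -> i e = i e' -> d e e' < eps n -> e = e').
  { intros n e e' he he' hie hd'. symmetry. apply he; auto. rewrite hie. auto. }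
  assert (hBa : exists n x0 r, 0 < r /\ forall y, d x0 y < r -> forall ep, 0 < ep -> exists e, E n e /\ d y e < ep).
  { apply NNPP. intro hn.
    set (G := fun n y => exists ep, 0 < ep /\ forall e, E n e -> ep <= d y e).
    assert (hG : forall n, is_open d (G n) /\ is_dense d (G n)).
    { intro n. split.
      - intros y [ep [hep h]]. exists (ep / 2). split; [lra|].
        intros z hz. unfold ball in hz. exists (ep / 2). split; [lra|].
        intros e he. specialize (h e he). specialize (dtri y z e). lra.
      - intros U hU [x hx]. destruct (hU x hx) as [r [hr hxr]].
        assert (h : ~ (forall y, d x y < r -> forall ep, 0 < ep -> exists e, E n e /\ d y e < ep)).
        { intro h. apply hn. exists n, x, r. auto. }
        apply not_all_ex_not in h. destruct h as [y h]. apply imply_to_and in h.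
        destruct h as [hy h]. apply not_all_ex_not in h. destruct h as [ep h].
        apply imply_to_and in h. destruct h as [hep h].
        exists y. split; [apply hxr; auto|].
        exists ep. split; auto. intros e he. apply Rnot_lt_le. intro hl. apply h. eauto. }
    destruct (hB G hG (fun _ => True)) as [y [_ hy]].
    - intros z _. exists 1. split; [lra|auto].
    - exists x00; auto.
    - destruct (hy (k y)) as [ep [hep h]]. specialize (h y (hk y)). rewrite drefl in h. lra. }
  destruct hBa as [n [x0 [r [hr hcl]]]].
  set (rho := Rmin r (eps n / 4)).
  assert (hrho1 : rho <= r) by apply Rmin_l.
  assert (hrho2 : rho <= eps n / 4) by apply Rmin_r.
  assert (hepsn := eps_pos n).
  assert (hrho0 : 0 < rho) by (apply Rmin_glb_lt; lra).
  set (B := fun y => d x0 y < rho).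
  assert (avoid : forall l : list X, exists z de, 0 < de /\ forall w, d z w < de -> B w /\ ~ In w l).
  { induction l as [|a l IH].
    - exists x0, rho. split; [auto|]. intros w hw. split; [exact hw|]. intro c; destruct c.
    - destruct IH as [z [de [hde h]]].
      destruct (classic (z = a)) as [e|ne].
      + subst z. destruct (noiso' a de hde) as [w [hw1 hw2]].
        assert (0 < d w a) by (apply dneq; auto).
        exists w, (Rmin (de - d a w) (d w a)). split.
        * apply Rmin_glb_lt; lra.
        * intros v hv. assert (h1 := Rmin_l (de - d a w) (d w a)).
          assert (h2 := Rmin_r (de - d a w) (d w a)).
          assert (dav : d a v < de) by (specialize (dtri a w v); lra).
          destruct (h v dav) as [hb hl]. split; auto.
          intros [hv'|hv']; auto. subst v. lra.
      + assert (0 < d z a) by (apply dneq; auto).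
        exists z, (Rmin de (d z a)). split.
        * apply Rmin_glb_lt; lra.
        * intros v hv. assert (h1 := Rmin_l de (d z a)).
          assert (h2 := Rmin_r de (d z a)).
          destruct (h v ltac:(lra)) as [hb hl]. split; auto.
          intros [hv'|hv']; auto. subst v. lra. }
  assert (avoid2 : forall l : list X, exists z, E n z /\ B z /\ ~ In z l).
  { intro l. destruct (avoid l) as [z [de [hde h]]].
    destruct (h z ltac:(rewrite drefl; lra)) as [hbz _].
    destruct (hcl z ltac:(unfold B in hbz; lra) de hde) as [e [he hze]].
    exists e. destruct (h e hze). auto. }
  apply fchoice in avoid2. destruct avoid2 as [next hnext].
  set (L := fix L (m : nat) : list X := match m with O => nil | S m' => next (L m') :: L m' end).
  assert (hL : forall m p, (m < p)%nat -> In (next (L m)) (L p)).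
  { intros m p; induction p as [|p IHp]; intro hmp; [lia|].
    simpl. destruct (Nat.eq_dec m p) as [e|ne]; [subst; left; auto| right; apply IHp; lia]. }
  assert (Bsmall : forall y y', B y -> B y' -> d y y' < eps n / 2).
  { intros y y' hy hy'. unfold B in *. specialize (dtri y x0 y'). rewrite (dsym y x0) in dtri. lra. }
  set (gs := fun m => i (next (L m))).
  assert (hgs : forall m p, gs m = gs p -> m = p).
  { assert (aux : forall m p, (m < p)%nat -> gs m <> gs p).
    { intros m p hmp e. destruct (hnext (L m)) as [h1 [h2 h3]]. destruct (hnext (L p)) as [h1' [h2' h3']].
      assert (next (L m) = next (L p)).
      { apply (Einj n); auto. specialize (Bsmall _ _ h2 h2'). lra. }
      apply h3'. match goal with hq : next (L m) = next (L p) |- _ => rewrite <- hq end. apply hL; auto. }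
    intros m p e. destruct (Nat.lt_total m p) as [h|[h|h]]; auto.
    - exfalso; apply (aux m p); auto.
    - exfalso; apply (aux p m); auto. }
  destruct (hess I gs hgs) as [h hh].
  set (H3 := fun a b (t : nat) => h (h (a, b), gs t)).
  assert (hH3 : forall a b t a' b' t', H3 a b t = H3 a' b' t' -> a = a' /\ b = b' /\ t = t').
  { intros a b t a' b' t' e. unfold H3 in e. apply hh in e. injection e; intros e1 e2.
    apply hh in e2. apply hgs in e1. injection e2; intros; subst; auto. }
  assert (hech : forall y, exists e, B y -> E n e /\ d y e < Rmin (eps (k y) / 3) (eps n / 4)).
  { intro y. destruct (classic (B y)) as [hy|hy].
    - assert (0 < Rmin (eps (k y) / 3) (eps n / 4)).
      { assert (hh1 := eps_pos (k y)). apply Rmin_glb_lt; lra. }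
      match goal with hq : 0 < Rmin _ _ |- _ => destruct (hcl y ltac:(unfold B in hy; lra) _ hq) as [e he] end. exists e; auto.
    - exists y; intro; contradiction. }
  apply fchoice in hech. destruct hech as [ech hech].
  exists B. split; [|split].
  - intros y hy. exists (rho - d x0 y). split; [unfold B in hy; lra|].
    intros z hz. unfold ball in hz. unfold B. specialize (dtri x0 y z). lra.
  - exists x0. unfold B. rewrite drefl. lra.
  - exists (fun y => H3 (i y) (i (ech y)) (k y)).
    intros y y' hy hy' e. apply hH3 in e. destruct e as [e1 [e2 e3]].
    destruct (hech y hy) as [he hde]. destruct (hech y' hy') as [he' hde'].
    assert (m1 := Rmin_l (eps (k y) / 3) (eps n / 4)).
    assert (m2 := Rmin_r (eps (k y) / 3) (eps n / 4)).
    assert (m1' := Rmin_l (eps (k y') / 3) (eps n / 4)).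
    assert (m2' := Rmin_r (eps (k y') / 3) (eps n / 4)).
    assert (ee : ech y = ech y').
    { apply (Einj n); auto.
      specialize (Bsmall _ _ hy hy').
      pose proof (dtri (ech y) y (ech y')) as t1.
      pose proof (dtri y y' (ech y')) as t2.
      rewrite (dsym (ech y) y) in t1. lra. }
    symmetry. apply (hk y).
    + rewrite e1. auto.
    + rewrite <- e3 in hde'. rewrite <- ee in hde'.
      pose proof (dtri y (ech y) y') as t1. rewrite (dsym (ech y) y') in t1.
      assert (hh1 := eps_pos (k y)). lra.
Qed.
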